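(* Let $N\in\mathbb{Z}^+$ and $\boldsymbol{\mu}\in\mathbb{R}_+^N$ with $0\le\mu[n]\le1$ for all $n$, and suppose $t=\sum_{n=1}^N\mu[n]\ge1$ is not an integer. Define $m_1[n]=\big[\mu[n]-(t-\lfloor t\rfloor)\big]^+$, $m_2[n]=\big[\mu[n]-(\lceil t\rceil-t)\big]^+$, $$r=\frac{\lfloor t\rfloor(\lceil t\rceil-t)-\sum_{n} m_1[n]}{t-\sum_{n} m_1[n]-\sum_{n} m_2[n]},$$ $\boldsymbol{\mu}^{(\lfloor t\rfloor)}=\boldsymbol{m}_1+(\boldsymbol{\mu}-\boldsymbol{m}_1-\boldsymbol{m}_2)r$ and $\boldsymbol{\mu}^{(\lceil t\rceil)}=\boldsymbol{m}_2+(\boldsymbol{\mu}-\boldsymbol{m}_1-\boldsymbol{m}_2)(1-r)$. Then $\boldsymbol{\mu}^{(\lfloor t\rfloor)}$ and $\boldsymbol{\mu}^{(\lceil t\rceil)}$ are nonnegative vectors with $\boldsymbol{\mu}^{(\lfloor t\rfloor)}+\boldsymbol{\mu}^{(\lceil t\rceil)}=\boldsymbol{\mu}$, $\sum_n\mu^{(\lfloor t\rfloor)}[n]=\lfloor t\rfloor(\lceil t\rceil-t)$, $\sum_n\mu^{(\lceil t\rceil)}[n]=\lceil t\rceil(t-\lfloor t\rfloor)$, and for all $n\in[N]$, $\mu^{(\lfloor t\rfloor)}[n]\le\lceil t\rceil-t$ and $\mu^{(\lceil t\rceil)}[n]\le t-\lfloor t\rfloor$.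
   Context: $[x]^+=\max(x,0)$; vector operations are entrywise. *)

(* Defs.v *)
From mathcomp Require Import all_boot all_order all_algebra.
From mathcomp Require Import reals.
Set Implicit Arguments. Unset Strict Implicit. Unset Printing Implicit Defensive.
Import Order.TTheory GRing.Theory Num.Theory.
Local Open Scope ring_scope.

Definition pospart {R : realType} (x : R) : R := Num.max x 0.

Section Split.
Variables (R : realType) (N : nat) (mu : 'I_N -> R).
Definition tsum : R := \sum_(n < N) mu n.
Definition flo : R := (Num.floor tsum)%:~R.
Definition cei : R := (Num.ceil tsum)%:~R.
Definition m1 (n : 'I_N) : R := pospart (mu n - (tsum - flo)).
Definition m2 (n : 'I_N) : R := pospart (mu n - (cei - tsum)).
Definition rr : R :=
  (flo * (cei - tsum) - \sum_(n < N) m1 n) /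
  (tsum - \sum_(n < N) m1 n - \sum_(n < N) m2 n).
Definition mu_lo (n : 'I_N) : R := m1 n + (mu n - m1 n - m2 n) * rr.
Definition mu_hi (n : 'I_N) : R := m2 n + (mu n - m1 n - m2 n) * (1 - rr).
End Split.

(* Main.v *)
Require Import Defs.
From mathcomp Require Import all_boot all_order all_algebra.
From mathcomp Require Import reals.
From mathcomp Require Import ring lra.
Import Order.TTheory GRing.Theory Num.Theory.
Local Open Scope ring_scope.

Section Aux.
Variable R : realType.

Lemma ppE (x : R) : (0 <= x -> pospart x = x) /\ (x <= 0 -> pospart x = 0).
Proof.
rewrite /pospart; split => h.
- by rewrite max_l.
- by rewrite max_r.
Qed.

Lemma count_bound N (mu : 'I_N -> R) (s : R) : (forall n, 0 <= mu n <= 1) -> 0 <= s ->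
  exists k : nat, \sum_(n < N) pospart (mu n - s) <= (1 - s) * k%:R /\
    \sum_(n < N) pospart (mu n - s) <= \sum_(n < N) mu n - s * k%:R.
Proof.
move=> hmu hs; exists (\sum_(n < N) nat_of_bool (s < mu n)%R)%N.
rewrite natr_sum !mulr_sumr; split.
- apply: ler_sum => n _; have /andP[h0 h1] := hmu n.
  case: (ltrP s (mu n)) => h /=.
  + rewrite (ppE _).1; lra.
  + rewrite (ppE _).2; lra.
- rewrite -sumrB; apply: ler_sum => n _; have /andP[h0 h1] := hmu n.
  case: (ltrP s (mu n)) => h /=.
  + rewrite (ppE _).1; lra.
  + rewrite (ppE _).2; lra.
Qed.

Lemma intcase (k : nat) (F : int) :
  (k%:R : R) <= F%:~R \/ (F + 1)%:~R <= (k%:R : R).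
Proof.
have e : (k%:R : R) = (k%:Z)%:~R by [].
rewrite e !ler_int.
case: (lerP (k%:Z) F) => h; [left | right] => //.
by rewrite lezD1.
Qed.

Lemma dnn (x a b : R) : 0 <= x <= 1 -> 0 < a -> a < 1 -> b = 1 - a ->
  0 <= x - pospart (x - a) - pospart (x - b).
Proof.
move=> /andP[h0 h1] ha1 ha2 hb.
case: (lerP a x) => h; case: (lerP b x) => h'.
- rewrite (ppE (x - a)).1 ?(ppE (x - b)).1; lra.
- rewrite (ppE (x - a)).1 ?(ppE (x - b)).2; lra.
- rewrite (ppE (x - a)).2 ?(ppE (x - b)).1; lra.
- rewrite (ppE (x - a)).2 ?(ppE (x - b)).2; lra.
Qed.

Lemma elem (x a b r : R) : 0 <= x <= 1 -> 0 < a -> a < 1 -> b = 1 - a ->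
  0 <= r <= 1 ->
  let m1 := pospart (x - a) in let m2 := pospart (x - b) in
  [/\ 0 <= m1 + (x - m1 - m2) * r, 0 <= m2 + (x - m1 - m2) * (1 - r),
      m1 + (x - m1 - m2) * r <= b & m2 + (x - m1 - m2) * (1 - r) <= a].
Proof.
move=> /andP[h0 h1] ha1 ha2 hb /andP[r0 r1] m1 m2.
rewrite /m1 /m2.
case: (lerP a x) => h; case: (lerP b x) => h'.
- rewrite (ppE (x - a)).1 ?(ppE (x - b)).1; try lra; split; nra.
- rewrite (ppE (x - a)).1 ?(ppE (x - b)).2; try lra; split; nra.
- rewrite (ppE (x - a)).2 ?(ppE (x - b)).1; try lra; split; nra.
- rewrite (ppE (x - a)).2 ?(ppE (x - b)).2; try lra; split; nra.
Qed.

End Aux.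

Theorem mainTheorem8 (R : realType) (N : nat) (mu : 'I_N -> R) :
  (0 < N)%N ->
  (forall n, 0 <= mu n <= 1) ->
  1 <= tsum mu ->
  tsum mu \notin Num.int ->
  (forall n, 0 <= mu_lo mu n) /\ (forall n, 0 <= mu_hi mu n) /\
  (forall n, mu_lo mu n + mu_hi mu n = mu n) /\
  \sum_(n < N) mu_lo mu n = flo mu * (cei mu - tsum mu) /\
  \sum_(n < N) mu_hi mu n = cei mu * (tsum mu - flo mu) /\
  (forall n, mu_lo mu n <= cei mu - tsum mu) /\
  (forall n, mu_hi mu n <= tsum mu - flo mu).
Proof.
move=> _ hmu ht1 hint.
have hc : cei mu = flo mu + 1.
  by rewrite /cei /flo ceil_floor hint intrD.
have hft : flo mu <= tsum mu by exact: floor_le.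
have hft2 : tsum mu < flo mu + 1 by rewrite -(intrD _ _ 1); exact: floorD1_gt.
have hfne : flo mu != tsum mu by move: hint; rewrite intrEfloor.
have hf0 : 0 <= flo mu.
  have : (0 < Num.floor (tsum mu)) by rewrite floor_gt0.
  by move=> /ltW; rewrite -(ler_int R).
have hft' : flo mu < tsum mu by rewrite lt_neqAle hfne.
set t := tsum mu in hc hft hft2 hfne hft' ht1 hint *.
set f := flo mu in hc hft hft2 hfne hf0 hft' *.
set a := t - f.
set b := cei mu - t.
have hb : b = 1 - a by rewrite /b /a hc; lra.
have ha0 : 0 < a by rewrite /a; lra.
have ha1 : a < 1 by rewrite /a; lra.
set S1 := \sum_(n < N) m1 mu n.
set S2 := \sum_(n < N) m2 mu n.
have hS1 : S1 <= f * b.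
  have [k [k1 k2]] := @count_bound R N mu _ hmu (ltW ha0).
  have eS : S1 = \sum_(n < N) pospart (mu n - a) by [].
  have k2' : \sum_(n < N) pospart (mu n - a) <= t - a * k%:R := k2.
  rewrite eS.
  have [hk|hk] := intcase R k (Num.floor t).
  - have hk' : k%:R <= f := hk.
    have h1a : 0 <= 1 - a by lra.
    have := ler_wpM2l h1a hk'; rewrite hb; lra.
  - rewrite intrD in hk; have hk' : f + 1 <= k%:R := hk.
    have ea : a = t - f by [].
    have := ler_wpM2l (ltW ha0) hk'; rewrite hb; lra.
have hS2 : S2 <= cei mu * a.
  have hb0 : 0 <= b by lra.
  have [k [k1 k2]] := @count_bound R N mu _ hmu hb0.
  have eS : S2 = \sum_(n < N) pospart (mu n - b) by [].
  have k2' : \sum_(n < N) pospart (mu n - b) <= t - b * k%:R := k2.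
  rewrite eS hc.
  have [hk|hk] := intcase R k (Num.ceil t).
  - have hk' : k%:R <= f + 1 by rewrite -hc.
    have := ler_wpM2l (ltW ha0) hk'; have e1 : 1 - b = a by lra.
    rewrite e1 in k1; lra.
  - rewrite intrD in hk; have hk' : f + 1 + 1 <= k%:R by rewrite -hc.
    have ea : a = t - f by [].
    have := ler_wpM2l hb0 hk'; rewrite hb in k2' *; lra.
have hd : forall n, 0 <= mu n - m1 mu n - m2 mu n.
  move=> n; exact: (@dnn R _ _ _ (hmu n) ha0 ha1 hb).
set D := t - S1 - S2.
have hD : \sum_(n < N) (mu n - m1 mu n - m2 mu n) = D.
  by rewrite !sumrB.
have hD0 : 0 <= D by rewrite -hD; apply: sumr_ge0 => n _; exact: hd n.
have [hr hDr] : 0 <= rr mu <= 1 /\ D * rr mu = f * b - S1.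
  rewrite /rr -/t -/f -/(cei mu) -/b -/S1 -/S2 -/D.
  have eD : D = t - S1 - S2 by [].
  have ea : a = t - f by [].
  rewrite hc -/f in hS2; rewrite hb in hS1.
  case: (eqVneq D 0) => hDz.
  - rewrite hDz invr0 mulr0 mul0r lexx ler01; split => //.
    rewrite hb; lra.
  - have hDp : 0 < D by rewrite lt_neqAle eq_sym hDz.
    split; last by rewrite mulrC divfK.
    apply/andP; split.
    + apply: divr_ge0; rewrite ?hb; lra.
    + rewrite ler_pdivrMr // mul1r hb; lra.
have hel := fun n => @elem R _ _ _ _ (hmu n) ha0 ha1 hb hr.
have hsum : forall n, mu_lo mu n + mu_hi mu n = mu n.
  by move=> n; rewrite /mu_lo /mu_hi; ring.
have hlo : \sum_(n < N) mu_lo mu n = f * b.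
  rewrite /mu_lo big_split /= -mulr_suml hD hDr -/S1; ring.
split; [|split; [|split; [|split; [|split; [|split]]]]].
- by move=> n; have [] := hel n.
- by move=> n; have [] := hel n.
- exact: hsum.
- exact: hlo.
- have : \sum_(n < N) mu n = \sum_(n < N) mu_lo mu n + \sum_(n < N) mu_hi mu n.
    by rewrite -big_split /=; apply: eq_bigr => n _; rewrite hsum.
  move=> E; have E' : t = f * b + \sum_(n < N) mu_hi mu n by rewrite -hlo.
  have eb : b = f + 1 - t by rewrite /b hc.
  rewrite eb in E'; rewrite hc; have ea : a = t - f by []; rewrite ea; lra.
- by move=> n; have [] := hel n.
- by move=> n; have [] := hel n.
Qed.
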